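(* Let $p>0$ and let $(u_n)_{n\ge0}$ be a sequence in $E^1$ with partial sums $s_n=\sum_{k=0}^n u_k$. If the series $\sum u_n$ is $E_p$ summable to $\nu\in E^1$ and $\sqrt{n}\,D(u_n,\overline{0})=O(1)$ as $n\to\infty$, then the series $\sum u_n$ is bounded, i.e. there is $M>0$ with $D(s_n,\overline{0})<M$ for all $n$.
   Context: $E^1$ denotes the set of fuzzy numbers: functions $u:\mathbb{R}\to[0,1]$ that are normal, fuzzy convex, upper semicontinuous, and have compact support $\overline{\{t:u(t)>0\}}$. For $\alpha\in(0,1]$ the $\alpha$-level set is $[u]_\alpha=\{t:u(t)\ge\alpha\}$ and $[u]_0=\overline{\{t:u(t)>0\}}$; each is a compact interval $[u^-_\alpha,u^+_\alpha]$. Addition and scalar multiplication are defined levelwise: $[u+v]_\alpha=[u^-_\alpha+v^-_\alpha,u^+_\alpha+v^+_\alpha]$ and $[ku]_\alpha=k[u]_\alpha$ for $k\in\mathbb{R}$. The metric is $D(u,v)=\sup_{\alpha\in[0,1]}\max\{|u^-_\alpha-v^-_\alpha|,|u^+_\alpha-v^+_\alpha|\}$. $\overline{0}$ is the fuzzy number equal to $1$ at $0$ and $0$ elsewhere. A series $\sum u_n$ of fuzzy numbers is $E_p$ summable to $\nu$ if its sequence of partial sums $(s_n)$ has Euler means $\frac{1}{(p+1)^n}\sum_{k=0}^n\binom{n}{k}p^{n-k}s_k$ converging to $\nu$ in $D$. The paper denotes by $bs(F)$ the set of series of fuzzy numbers with bounded partial sums and states the conclusion as $(u_n)\in bs(F)$.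 *)

(* Defs.v *)
From HB Require Import structures.
From mathcomp Require Import all_boot all_order all_algebra.
From mathcomp Require Import all_classical all_reals all_analysis.
Set Implicit Arguments. Unset Strict Implicit. Unset Printing Implicit Defensive.
Import Order.TTheory GRing.Theory Num.Theory.
Import numFieldNormedType.Exports.
Local Open Scope classical_set_scope.
Local Open Scope ring_scope.

Section Fuzzy.
Variable R : realType.

Definition fsupp (u : R -> R) : set R := closure [set t | 0 < u t].

Definition usc (u : R -> R) : Prop :=
  forall t (e : R), 0 < e -> \forall x \near t, u x < u t + e.

Definition fuzzy_number (u : R -> R) : Prop :=
  [/\ (forall t, 0 <= u t <= 1),
      (exists t, u t = 1),
      (forall x y l, 0 <= l <= 1 -> Num.min (u x) (u y) <= u (l * x + (1 - l) * y)),
      usc u &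
      compact (fsupp u)].

Definition level (u : R -> R) (a : R) : set R :=
  if a == 0 then fsupp u else [set t | a <= u t].

Definition lend (u : R -> R) (a : R) : R := inf (level u a).
Definition rend (u : R -> R) (a : R) : R := sup (level u a).

(* Levelwise representation: alpha |-> ([u]_alpha^-, [u]_alpha^+).
   Addition and scalar multiplication of fuzzy numbers are defined levelwise,
   so we carry them out on these representations. *)
Definition lvl := R -> R * R.

Definition levels (u : R -> R) : lvl := fun a => (lend u a, rend u a).

Definition ladd (f g : lvl) : lvl := fun a => ((f a).1 + (g a).1, (f a).2 + (g a).2).
Definition lzero : lvl := fun _ => (0, 0).
Definition lscale (k : R) (f : lvl) : lvl :=
  fun a => if 0 <= k then (k * (f a).1, k * (f a).2) else (k * (f a).2, k * (f a).1).

Definition Dist (f g : lvl) : R :=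
  sup [set d | exists2 a, 0 <= a <= 1 &
         d = Num.max `|(f a).1 - (g a).1| `|(f a).2 - (g a).2|].

Definition fzero : R -> R := fun t => if t == 0 then 1 else 0.

Definition psum (u : nat -> R -> R) (n : nat) : lvl :=
  foldr ladd lzero [seq levels (u k) | k <- iota 0 n.+1].

Definition euler_mean (p : R) (u : nat -> R -> R) (n : nat) : lvl :=
  foldr ladd lzero
    [seq lscale ('C(n, k)%:R * p ^+ (n - k) / (p + 1) ^+ n) (psum u k) | k <- iota 0 n.+1].

End Fuzzy.

(* Main.v *)
Require Import Defs.
From HB Require Import structures.
From mathcomp Require Import all_boot all_order all_algebra.
From mathcomp Require Import all_classical all_reals all_analysis.
From mathcomp Require Import ring lra.
Import Order.TTheory GRing.Theory Num.Theory.
Import numFieldNormedType.Exports.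
Local Open Scope classical_set_scope.
Local Open Scope ring_scope.

Set Implicit Arguments. Unset Strict Implicit. Unset Printing Implicit Defensive.

Section Core.
Variable R : realType.

Lemma moment0 (p : R) n : \sum_(k < n.+1) 'C(n,k)%:R * p ^+ (n - k) = (p+1)^+n.
Proof. rewrite exprDn; apply: eq_bigr => k _; by rewrite expr1n mulr1 mulr_natl. Qed.

Lemma moment1 (p : R) n : (p+1) * \sum_(k < n.+1) k%:R * 'C(n,k)%:R * p^+(n-k)
   = n%:R * (p+1)^+n.
Proof.
case: n => [|n]; first by rewrite big_ord1 !mul0r mulr0.
rewrite big_ord_recl /= !mul0r add0r.
have -> : \sum_(i < n.+1) (lift ord0 i)%:R * 'C(n.+1, lift ord0 i)%:R * p ^+ (n.+1 - lift ord0 i)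
   = n.+1%:R * \sum_(i < n.+1) 'C(n,i)%:R * p^+(n - i).
  rewrite mulr_sumr; apply: eq_bigr => i _.
  rewrite /= /bump /= add1n subSS -natrM -mul_bin_diag natrM mulrA //.
by rewrite moment0 mulrCA -exprS.
Qed.

Lemma moment2 (p : R) n : (p+1)^+2 * \sum_(k < n.+1) (k%:R * (k%:R - 1)) * 'C(n,k)%:R * p^+(n-k)
   = n%:R * (n%:R - 1) * (p+1)^+n.
Proof.
case: n => [|n]; first by rewrite big_ord1 !mul0r mulr0.
rewrite big_ord_recl /= !mul0r add0r.
have -> : \sum_(i < n.+1) ((lift ord0 i)%:R * ((lift ord0 i)%:R - 1)) * 'C(n.+1, lift ord0 i)%:R * p ^+ (n.+1 - lift ord0 i)
   = n.+1%:R * \sum_(i < n.+1) i%:R * 'C(n,i)%:R * p^+(n - i).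
  rewrite mulr_sumr; apply: eq_bigr => i _.
  rewrite /= /bump /= add1n subSS.
  have -> : (i.+1%:R - 1 : R) = i%:R by rewrite -addn1 natrD addrK.
  rewrite -(mulrA (i%:R)) -natrM -natrM [(i.+1*i)%N]mulnC -mulnA -mul_bin_diag /= mulnCA !natrM.
  by rewrite !mulrA.
have h := moment1 p n. set S := \sum_(_ < _) _ in h *.
have -> : (n.+1%:R - 1 : R) = n%:R by rewrite -addn1 natrD addrK.
transitivity (n.+1%:R * (p+1) * ((p+1) * S)); first ring.
rewrite h exprS; ring.
Qed.

Lemma sqrt_step (b : nat) : 1 <= 2 * Num.sqrt (b.+1%:R : R) * (Num.sqrt b.+1%:R - Num.sqrt b%:R).
Proof.
set x := Num.sqrt (b%:R : R); set y := Num.sqrt (b.+1%:R : R).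
have x0 : 0 <= x by exact: sqrtr_ge0.
have y0 : 0 <= y by exact: sqrtr_ge0.
have hx : x ^+ 2 = b%:R by rewrite sqr_sqrtr.
have hy : y ^+ 2 = b%:R + 1 by rewrite sqr_sqrtr // -addn1 natrD.
nra.
Qed.
Lemma partial_bound (f : nat -> R) A :
  (forall k, (1 <= k)%N -> Num.sqrt (k%:R : R) * `|f k| <= A) ->
  forall a d, `|\sum_(i < (a + d).+1) f i - \sum_(i < a.+1) f i|
     <= 2 * A * (Num.sqrt (a + d)%:R - Num.sqrt a%:R).
Proof.
move=> HA a; elim=> [|d IH]; first by rewrite addn0 !subrr normr0 mulr0.
rewrite addnS big_ord_recr /=.
set x := Num.sqrt ((a + d)%:R : R); set y := Num.sqrt ((a+d).+1%:R : R).
set z := Num.sqrt (a%:R : R).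
have st := sqrt_step (a + d). rewrite -/x -/y in st.
have hf := HA (a + d).+1 isT. rewrite -/y in hf.
have yx : x <= y by rewrite ler_sqrt // ler_nat.
have f0 : 0 <= `|f (a + d).+1| by [].
have hfb : `|f (a + d).+1| <= 2 * A * (y - x) by nra.
apply: le_trans (_ : `|\sum_(i < (a + d).+1) f i - \sum_(i < a.+1) f i| + `|f (a + d).+1| <= _).
  by rewrite addrAC ler_normD.
have : 2 * A * (y - z) = 2 * A * (x - z) + 2 * A * (y - x) by ring.
move=> ->; exact: lerD.
Qed.

Lemma diff_bound (f : nat -> R) A :
  (forall k, (1 <= k)%N -> Num.sqrt (k%:R : R) * `|f k| <= A) ->
  forall k m, `|\sum_(i < k.+1) f i - \sum_(i < m.+1) f i|
     <= 2 * A * `|Num.sqrt k%:R - Num.sqrt m%:R|.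
Proof.
move=> HA k m; case: (leqP k m) => hkm.
  rewrite distrC [`|Num.sqrt _ - _|]distrC -(subnKC hkm) [X in _ <= _ * X]ger0_norm.
    exact: partial_bound.
  by rewrite subr_ge0 ler_sqrt // ler_nat leq_addr.
rewrite -(subnKC (ltnW hkm)) [X in _ <= _ * X]ger0_norm.
  exact: partial_bound.
by rewrite subr_ge0 ler_sqrt // ler_nat leq_addr.
Qed.

Lemma sqrt_quad (k m : nat) : (1 <= m)%N ->
  m%:R * (2 * `|Num.sqrt (k%:R : R) - Num.sqrt m%:R|) <= (k%:R - m%:R) ^+ 2 + m%:R.
Proof.
move=> hm.
set x := Num.sqrt (k%:R : R); set y := Num.sqrt (m%:R : R).
have x0 : 0 <= x by exact: sqrtr_ge0.
have y0 : 0 <= y by exact: sqrtr_ge0.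
have hx : x ^+ 2 = k%:R by rewrite sqr_sqrtr.
have hy : y ^+ 2 = m%:R by rewrite sqr_sqrtr.
rewrite -hx -hy.
set d := x - y.
have e1 : 2 * `|d| <= d ^+ 2 + 1.
  have := sqr_ge0 (d - 1); have := sqr_ge0 (d + 1).
  have [d0|d0] := lerP 0 d; [rewrite ger0_norm // | rewrite ltr0_norm //]; nra.
have e2 : y ^+ 2 * d ^+ 2 <= (x ^+ 2 - y ^+ 2) ^+ 2.
  have -> : x ^+ 2 - y ^+ 2 = (x + y) * d by rewrite /d; ring.
  rewrite exprMn; apply: ler_wpM2r; first exact: sqr_ge0.
  rewrite ler_sqr ?nnegrE; lra.
have ym : 0 <= y ^+ 2 by exact: sqr_ge0.
nra.
Qed.

Lemma core (p : R) (f : nat -> R) A T n0 : 0 < p -> 0 <= A ->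
  (forall k, (1 <= k)%N -> Num.sqrt (k%:R : R) * `|f k| <= A) ->
  (forall n, (n0 <= n)%N ->
     `|\sum_(k < n.+1) ('C(n,k)%:R * p^+(n-k) / (p+1)^+n) * \sum_(j < k.+1) f j| <= T) ->
  forall m, (1 <= m)%N -> (n0 <= m)%N -> `|\sum_(j < m.+1) f j| <= T + 4 * A.
Proof.
move=> p0 A0 HA HT m m1 n0m.
set s := fun j => \sum_(i < j.+1) f i.
have mr1 : 1 <= (m%:R : R) by rewrite ler1n.
set x := m%:R * (p + 1).
have x0 : 0 <= x by rewrite mulr_ge0 // ?ler0n // addr_ge0 // ltW.
set n := (Num.truncn x).+1.
have hn1 : x < n%:R by exact: truncnS_gt.
have hn2 : n%:R <= x + 1 by rewrite /n -addn1 natrD lerD2r truncn_le.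
have mn : (m <= n)%N.
  rewrite -(ler_nat R); apply: ltW; apply: le_lt_trans hn1.
  rewrite /x ler_peMr ?ler0n //; lra.
have Ht := HT n (leq_trans n0m mn).
set P := (p + 1) ^+ n.
have P0 : 0 < P by rewrite exprn_gt0 //; lra.
set w := fun k : nat => 'C(n,k)%:R * p^+(n-k).
have w0 : forall k, 0 <= w k by move=> k; rewrite mulr_ge0 ?ler0n // exprn_ge0 // ltW.
set t := \sum_(k < n.+1) ('C(n,k)%:R * p^+(n-k) / (p+1)^+n) * \sum_(j < k.+1) f j.
have key : P * t - P * s m = \sum_(k < n.+1) w k * (s k - s m).
  have -> : P * s m = \sum_(k < n.+1) w k * s m by rewrite -mulr_suml /w moment0.
  rewrite /t mulr_sumr -sumrB; apply: eq_bigr => k _.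
  rewrite mulrBr; congr (_ - _); rewrite /w -/P.
  by rewrite mulrCA !mulrA mulfVK ?gt_eqF // mulrC.
have bnd : m%:R * `|P * t - P * s m| <=
    A * (\sum_(k < n.+1) w k * (k%:R - m%:R)^+2 + m%:R * P).
  rewrite key.
  apply: le_trans (_ : m%:R * \sum_(k < n.+1) w k * `|s k - s m| <= _).
    rewrite ler_pM2l; last lra.
    apply: le_trans; first exact: ler_norm_sum.
    apply: ler_sum => k _ /=.
    by rewrite normrM ger0_norm.
  rewrite mulr_sumr.
  apply: le_trans (_ : \sum_(k < n.+1) w k * (A * ((k%:R - m%:R)^+2 + m%:R)) <= _).
    apply: ler_sum => k _; rewrite mulrCA; apply: ler_wpM2l; first exact: w0.
    have hd := @diff_bound _ _ HA k m.
    have hq := @sqrt_quad k m m1.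
    apply: le_trans (_ : m%:R * (2 * A * `|Num.sqrt (k%:R : R) - Num.sqrt m%:R|) <= _).
      by rewrite ler_pM2l //; lra.
    have -> : m%:R * (2 * A * `|Num.sqrt (k%:R : R) - Num.sqrt m%:R|)
       = A * (m%:R * (2 * `|Num.sqrt (k%:R : R) - Num.sqrt m%:R|)) by ring.
    exact: ler_wpM2l.
  have -> : \sum_(k < n.+1) w k * (A * ((k%:R - m%:R)^+2 + m%:R))
     = \sum_(k < n.+1) (A * (w k * (k%:R - m%:R)^+2) + (A * m%:R) * w k).
    by apply: eq_bigr => k _; ring.
  rewrite big_split /= -!mulr_sumr /w moment0 -/P.
  rewrite le_eqVlt; apply/orP; left; apply/eqP; ring.
have var : \sum_(k < n.+1) w k * (k%:R - m%:R)^+2 <= (m%:R + 2) * P.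
  set S2 := \sum_(k < n.+1) (k%:R * (k%:R - 1)) * 'C(n,k)%:R * p^+(n-k).
  set S1 := \sum_(k < n.+1) k%:R * 'C(n,k)%:R * p^+(n-k).
  have h1 : (p + 1) * S1 = n%:R * P := moment1 p n.
  have h2 : (p + 1)^+2 * S2 = n%:R * (n%:R - 1) * P := moment2 p n.
  have -> : \sum_(k < n.+1) w k * (k%:R - m%:R)^+2 = S2 + (1 - 2 * m%:R) * S1 + m%:R^+2 * P.
    rewrite /P -(moment0 p n) /S1 /S2 mulr_sumr mulr_sumr -!big_split /=.
    by apply: eq_bigr => k _; rewrite /w; ring.
  have pp : 0 < (p + 1) ^+ 2 by rewrite exprn_gt0 //; lra.
  rewrite -(ler_pM2l pp).
  have -> : (p + 1) ^+ 2 * (S2 + (1 - 2 * m%:R) * S1 + m%:R ^+ 2 * P)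
     = (p + 1) ^+ 2 * S2 + (1 - 2 * m%:R) * (p + 1) * ((p + 1) * S1) + m%:R ^+ 2 * (p+1)^+2 * P by ring.
  rewrite h1 h2.
  have hq : n%:R * (n%:R - 1) + (1 - 2 * m%:R) * (p + 1) * n%:R + m%:R ^+ 2 * (p + 1) ^+ 2
     <= (p + 1) ^+ 2 * (m%:R + 2).
    have -> : n%:R * (n%:R - 1) + (1 - 2 * m%:R) * (p + 1) * n%:R + m%:R ^+ 2 * (p + 1) ^+ 2
       = (n%:R - x) ^+ 2 + p * n%:R :> R by rewrite /x; ring.
    have e1 : (n%:R - x) ^+ 2 <= 1.
      rewrite -[1](expr1n _ 2) ler_sqr ?nnegrE; lra.
    have e2 : p * n%:R <= p * (x + 1) by rewrite ler_pM2l.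
    have e3 : p * (x + 1) + 1 <= (p + 1) ^+ 2 * (m%:R + 2).
      have hm : 0 <= m%:R * (p + 1) by [].
      rewrite /x; nra.
    apply: le_trans e3; rewrite addrC; apply: lerD => //.
  have -> : n%:R * (n%:R - 1) * P + (1 - 2 * m%:R) * (p + 1) * (n%:R * P) +
        m%:R ^+ 2 * (p + 1) ^+ 2 * P
     = (n%:R * (n%:R - 1) + (1 - 2 * m%:R) * (p + 1) * n%:R + m%:R ^+ 2 * (p + 1) ^+ 2) * P by ring.
  rewrite [(p + 1) ^+ 2 * ((m%:R + 2) * P)]mulrA; apply: ler_wpM2r => //; exact: ltW.
have h4 : m%:R * `|P * t - P * s m| <= (m%:R * P) * (4 * A).
  apply: le_trans bnd _.
  have : A * (\sum_(k < n.+1) w k * (k%:R - m%:R)^+2 + m%:R * P) <= A * ((m%:R + 2) * P + m%:R * P).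
    by apply: ler_wpM2l => //; rewrite lerD2r.
  move/le_trans; apply.
  have -> : A * ((m%:R + 2) * P + m%:R * P) = (2 * m%:R + 2) * (A * P) by ring.
  have -> : m%:R * P * (4 * A) = (4 * m%:R) * (A * P) by ring.
  apply: ler_wpM2r; [by rewrite mulr_ge0 // ltW | lra].
have h5 : `|t - s m| <= 4 * A.
  rewrite -mulrBr normrM (gtr0_norm P0) mulrA in h4.
  by rewrite -(ler_pM2l (_ : 0 < m%:R * P)) // mulr_gt0 //; lra.
have -> : \sum_(j < m.+1) f j = t - (t - s m) by rewrite /s; ring.
apply: le_trans (ler_normB _ _) _.
exact: lerD.
Qed.

End Core.

Section Fz.
Variable R : realType.

Definition prj (b : bool) (x : R * R) : R := if b then x.1 else x.2.

Lemma prj_foldr b (s : seq (lvl R)) a :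
  prj b (foldr (@ladd R) (@lzero R) s a) = \sum_(f <- s) prj b (f a).
Proof.
elim: s => [|f s IH] /=; first by rewrite big_nil; case: (b).
by rewrite big_cons -IH; case: (b).
Qed.

Lemma prj_psum b (u : nat -> R -> R) n a :
  prj b (psum u n a) = \sum_(k < n.+1) prj b (levels (u k) a).
Proof.
rewrite /psum prj_foldr big_map.
have -> : iota 0 n.+1 = index_iota 0 n.+1 by rewrite /index_iota subn0.
by rewrite big_mkord.
Qed.

Definition cf (p : R) n k : R := 'C(n,k)%:R * p^+(n-k) / (p+1)^+n.

Lemma cf_ge0 p n k : 0 < p -> 0 <= cf p n k.
Proof.
move=> p0; rewrite /cf divr_ge0 // ?mulr_ge0 ?ler0n // ?exprn_ge0 //; lra.
Qed.

Lemma prj_euler b p (u : nat -> R -> R) n a : 0 < p ->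
  prj b (euler_mean p u n a) = \sum_(k < n.+1) cf p n k * prj b (psum u k a).
Proof.
move=> p0; rewrite /euler_mean prj_foldr big_map.
have -> : iota 0 n.+1 = index_iota 0 n.+1 by rewrite /index_iota subn0.
rewrite big_mkord.
apply: eq_bigr => k _; rewrite /lscale.
have := @cf_ge0 p n k p0; rewrite /cf => ->.
by case: b.
Qed.

Lemma Dist_ge (f g : lvl R) B C a b :
  (forall b a, 0 <= a <= 1 -> `|prj b (f a)| <= B) ->
  (forall b a, 0 <= a <= 1 -> `|prj b (g a)| <= C) ->
  0 <= a <= 1 -> `|prj b (f a) - prj b (g a)| <= Dist f g.
Proof.
move=> hB hC ha.
have hs : has_sup [set d | exists2 a, 0 <= a <= 1 &
         d = Num.max `|(f a).1 - (g a).1| `|(f a).2 - (g a).2|].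
  split.
    exists (Num.max `|(f 0).1 - (g 0).1| `|(f 0).2 - (g 0).2|); exists 0 => //.
    by rewrite lexx ler01.
  exists (B + C) => _ [a' ha' ->].
  have h1 := hB true a' ha'; have h2 := hC true a' ha'.
  have h3 := hB false a' ha'; have h4 := hC false a' ha'.
  rewrite /prj /= in h1 h2 h3 h4.
  rewrite ge_max; apply/andP; split; apply: le_trans (ler_normB _ _) _; exact: lerD.
apply: le_trans (sup_upper_bound hs _); last by exists a.
by case: b; rewrite /prj; [rewrite le_max lexx | rewrite le_max lexx orbT].
Qed.

Lemma Dist_le (f g : lvl R) M :
  (forall b a, 0 <= a <= 1 -> `|prj b (f a) - prj b (g a)| <= M) -> Dist f g <= M.
Proof.
move=> hM; apply: ge_sup.
  exists (Num.max `|(f 0).1 - (g 0).1| `|(f 0).2 - (g 0).2|); exists 0 => //.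
  by rewrite lexx ler01.
move=> _ [a ha ->]; rewrite ge_max; apply/andP; split.
  exact: (hM true).
exact: (hM false).
Qed.

Lemma levels_fzero b a : 0 <= a <= 1 -> prj b (levels (@fzero R) a) = 0.
Proof.
move=> /andP[a0 a1].
have E : level (@fzero R) a = [set 0].
  rewrite /level; case: eqP => [_|/eqP an0].
    rewrite /fsupp.
    have -> : [set t | 0 < fzero t] = [set (0:R)].
      apply/seteqP; split => t /=; rewrite /fzero.
        by case: eqP => // _; rewrite ltxx.
      by move=> ->; rewrite eqxx ltr01.
    apply/esym/closure_id; apply: accessible_closed_set1.
    apply: hausdorff_accessible; exact: Rhausdorff.
  apply/seteqP; split => t /=; rewrite /fzero.
    case: eqP => // _ h; have : 0 < a by rewrite lt_neqAle eq_sym an0.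
    by rewrite ltNge h.
  by move=> ->; rewrite eqxx.
by rewrite /levels /lend /rend E; case: b; rewrite /prj /= ?inf1 ?sup1.
Qed.

Lemma levels_bound (u : R -> R) : fuzzy_number u ->
  exists B, 0 <= B /\ forall b a, 0 <= a <= 1 -> `|prj b (levels u a)| <= B.
Proof.
case=> _ [t1 ht1] _ _ hc.
have [M HM] : exists M, forall x, fsupp u x -> `|x| <= M.
  move/compact_bounded : hc => [M0 [_ HM]]; exists (`|M0| + 1); apply: HM.
  by rewrite (le_lt_trans (ler_norm _)) // ltrDl.
have sub : forall a, 0 <= a <= 1 -> level u a `<=` fsupp u /\ level u a t1.
  move=> a /andP[a0 a1]; rewrite /level; case: eqP => [_|/eqP an0].
    split => //; apply: subset_closure; by rewrite /= ht1 ltr01.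
  have ap : 0 < a by rewrite lt_neqAle eq_sym an0.
  split; last by rewrite /= ht1.
  move=> t /= h; apply: subset_closure => /=; exact: lt_le_trans h.
have M0 : 0 <= M.
  have h1 : 0 <= (1:R) <= 1 by rewrite ler01 lexx.
  have [s1 s2] := sub 1 h1.
  exact: le_trans (normr_ge0 t1) (HM _ (s1 _ s2)).
exists M; split => // b a ha.
have [s1 s2] := sub a ha.
have ub : forall x, level u a x -> -M <= x <= M.
  by move=> x /s1 /HM; rewrite ler_norml.
have [lo hi] := andP (ub t1 s2).
have hlb : has_lbound (level u a) by exists (-M) => x /ub /andP[].
have hub : has_ubound (level u a) by exists M => x /ub /andP[].
rewrite ler_norml; case: b; rewrite /prj /levels /lend /rend /=; apply/andP; split.
- apply: lb_le_inf; first by exists t1.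
  by move=> x /ub /andP[].
- apply: le_trans (ge_inf hlb s2) hi.
- apply: le_trans lo (ub_le_sup hub s2).
- apply: ge_sup; first by exists t1.
  by move=> x /ub /andP[].
Qed.
End Fz.

Lemma sum_mono (R : realType) (B : nat -> R) (hB : forall k, 0 <= B k) m K :
  (m <= K)%N -> \sum_(j < m) B j <= \sum_(j < K) B j.
Proof.
elim: K m => [|K IH] m hm.
  by move: hm; rewrite leqn0 => /eqP ->.
rewrite leq_eqVlt in hm; case/orP: hm => [/eqP -> // | hm].
apply: le_trans (IH m hm) _.
by rewrite big_ord_recr /= lerDl.
Qed.

Unset Implicit Arguments.

Theorem mainTheorem6 (R : realType) (p : R) (u : nat -> R -> R) (nu : R -> R) :
  0 < p ->
  (forall n, fuzzy_number (u n)) ->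
  fuzzy_number nu ->
  (fun n => Dist (euler_mean p u n) (levels nu)) @ \oo --> (0 : R) ->
  (exists C : R, exists N : nat, forall n : nat, (N <= n)%N ->
      Num.sqrt (n%:R) * Dist (levels (u n)) (levels (@fzero R)) <= C) ->
  exists M : R, 0 < M /\ forall n : nat, Dist (psum u n) (levels (@fzero R)) < M.
Proof.
move=> p0 hu hnu hcv [C [N HC]].
have [B HB] := boolp.choice (fun k => levels_bound (hu k)).
have B0 : forall k, 0 <= B k by move=> k; case: (HB k).
have HBk : forall k b a, 0 <= a <= 1 -> `|prj b (levels (u k) a)| <= B k.
  by move=> k; case: (HB k).
have [Bn [Bn0 HBn]] := levels_bound hnu.
have hz : forall b a, 0 <= a <= 1 -> `|prj b (levels (@fzero R) a)| <= 0.
  by move=> b a ha; rewrite levels_fzero // normr0.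
pose E n := \sum_(k < n.+1) cf p n k * \sum_(j < k.+1) B j.
have HE : forall n b a, 0 <= a <= 1 -> `|prj b (euler_mean p u n a)| <= E n.
  move=> n b a ha; rewrite prj_euler //.
  apply: le_trans; first exact: ler_norm_sum.
  apply: ler_sum => k _; rewrite normrM ger0_norm ?cf_ge0 //.
  apply: ler_wpM2l; first exact: cf_ge0.
  rewrite prj_psum; apply: le_trans; first exact: ler_norm_sum.
  by apply: ler_sum => j _; apply: HBk.
move/cvgr_dist_lt: hcv => /(_ 1 ltr01) [n0 _ Hn0].
pose T := 1 + Bn.
have HT : forall n, (n0 <= n)%N -> forall b a, 0 <= a <= 1 ->
    `|prj b (euler_mean p u n a)| <= T.
  move=> n hn b a ha.
  have hd := Hn0 n hn; rewrite /= sub0r normrN in hd.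
  have hD := Dist_ge b (HE n) HBn ha.
  have -> : prj b (euler_mean p u n a) =
     (prj b (euler_mean p u n a) - prj b (levels nu a)) + prj b (levels nu a) by ring.
  apply: le_trans (ler_normD _ _) _; rewrite /T; apply: lerD; last exact: HBn.
  apply: le_trans hD _; apply: ltW; exact: le_lt_trans (ler_norm _) hd.
pose A := `|C| + \sum_(k < N) Num.sqrt (k%:R : R) * B k.
have A0 : 0 <= A.
  by rewrite addr_ge0 // sumr_ge0 // => k _; rewrite mulr_ge0 ?sqrtr_ge0.
have HA : forall b a, 0 <= a <= 1 -> forall k, (1 <= k)%N ->
    Num.sqrt (k%:R : R) * `|prj b (levels (u k) a)| <= A.
  move=> b a ha k k1; case: (ltnP k N) => hk.
    apply: le_trans (_ : Num.sqrt (k%:R : R) * B k <= _).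
      by apply: ler_wpM2l; [exact: sqrtr_ge0 | exact: HBk].
    rewrite /A; apply: le_trans (_ : \sum_(j < N) Num.sqrt (j%:R : R) * B j <= _); last first.
      by rewrite lerDr.
    rewrite (bigD1 (Ordinal hk)) //= lerDl sumr_ge0 // => j _.
    by rewrite mulr_ge0 ?sqrtr_ge0.
  apply: le_trans (_ : Num.sqrt (k%:R : R) * Dist (levels (u k)) (levels (@fzero R)) <= _).
    apply: ler_wpM2l; first exact: sqrtr_ge0.
    have := Dist_ge b (HBk k) hz ha.
    by rewrite levels_fzero // subr0.
  apply: le_trans (HC k hk) _; rewrite /A.
  apply: le_trans (ler_norm C) _; rewrite lerDl sumr_ge0 // => j _.
  by rewrite mulr_ge0 ?sqrtr_ge0.
pose K := maxn 1 n0.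
pose M := \sum_(j < K) B j + (T + 4 * A) + 1.
have Hbig : forall m b a, 0 <= a <= 1 -> `|prj b (psum u m a)| <= \sum_(j < K) B j + (T + 4 * A).
  move=> m b a ha; case: (ltnP m K) => hm.
    apply: le_trans (_ : \sum_(j < K) B j <= _); last first.
      rewrite lerDl addr_ge0 // ?mulr_ge0 // /T; lra.
    rewrite prj_psum; apply: le_trans; first exact: ler_norm_sum.
    apply: le_trans (_ : \sum_(j < m.+1) B j <= _).
      by apply: ler_sum => j _; apply: HBk.
    exact: sum_mono.
  apply: le_trans (_ : T + 4 * A <= _); last by rewrite lerDr sumr_ge0.
  rewrite prj_psum.
  have m1 : (1 <= m)%N by apply: leq_trans hm; rewrite leq_maxl.
  have mn0 : (n0 <= m)%N by apply: leq_trans hm; rewrite leq_maxr.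
  apply: (@core R p (fun j => prj b (levels (u j) a)) A T n0 p0 A0 (HA b a ha)) => //.
  move=> n hn.
  have := HT n hn b a ha; rewrite prj_euler //.
  suff -> : \sum_(k < n.+1) cf p n k * prj b (psum u k a) =
    \sum_(k < n.+1) ('C(n,k)%:R * p^+(n-k) / (p+1)^+n) *
       \sum_(j < k.+1) prj b (levels (u j) a) by [].
  by apply: eq_bigr => k _; rewrite prj_psum.
exists M; split.
  rewrite /M /T; have : 0 <= \sum_(j < K) B j by rewrite sumr_ge0.
  lra.
move=> n; apply: le_lt_trans (_ : \sum_(j < K) B j + (T + 4 * A) < M); last first.
  by rewrite /M ltrDl.
apply: Dist_le => b a ha.
by rewrite levels_fzero // subr0; apply: Hbig.
Qed.
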